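(* Assume $\mathbb Ef(\boldsymbol X)=0$ and $p_{\min}>0$. Let $s\ge1$, let $m_1,\dots,m_{s-1}\in\{1,\dots,M\}$, define $R_0\equiv0$ and $R_t(\boldsymbol X)=R_{t-1}(\boldsymbol X)+\mathbb E(f(\boldsymbol X)-R_{t-1}(\boldsymbol X)\mid\boldsymbol X_{\mathcal X(m_t)})$ for $1\le t\le s-1$, and let $m\in\{1,\dots,M\}\setminus\{m_1,\dots,m_{s-1}\}$. Then $$\Big|\mathbb E\big[(\mathbb E(f(\boldsymbol X)-R_{s-1}(\boldsymbol X)\mid\boldsymbol X_{\mathcal X(m)}))^2\big]-\mathrm{Var}(g_m(\boldsymbol X))\Big|\le\frac{21\,\delta_0}{p_{\min}^2}\,\mathbb E[f(\boldsymbol X)^2].$$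
   Context: Setup. $\boldsymbol X=(X_1,\dots,X_p)^\top$ is a random vector in $\{0,1\}^p$; $\{1,\dots,p\}$ is partitioned into disjoint nonempty feature groups $\mathcal X(1),\dots,\mathcal X(M)$, $M\ge2$; a group is either a single feature or has $\#\mathcal X(m)>1$ and consists of one-hot indicators ($\sum_{j\in\mathcal X(m)}\mathbf 1\{X_j=1\}=1$ a.s.). $\boldsymbol X_H=(X_j)_{j\in H}$, $\boldsymbol X_{-H}=(X_j)_{j\notin H}$. Conditional expectations given null events are set to $0$. $p_{\min}=\min_{1\le l<k\le M,\,i\in\mathcal X(l),\,j\in\mathcal X(k),\,(a,b)\in\{0,1\}^2}\mathbb P(X_i=a,X_j=b)$; $\delta_0=\max_{1\le m\le M}\inf\{\delta\ge0:\mathbb P(\max_{i\in\mathcal X(m)}|\mathbb P(X_i=1\mid\boldsymbol X_{-\mathcal X(m)})-\mathbb P(X_i=1)|\le\delta)=1\}$. For $f:\{0,1\}^p\to\mathbb R$, $g_m(\boldsymbol X)=\mathbb E(f(\boldsymbol X)-\mathbb E(f(\boldsymbol X)\mid\boldsymbol X_{-\mathcal X(m)})\mid\boldsymbol X_{\mathcal X(m)})$. *)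

(* Defs.v *)
From mathcomp Require Import all_boot all_order all_algebra.
From mathcomp Require Import classical_sets reals.
Set Implicit Arguments. Unset Strict Implicit. Unset Printing Implicit Defensive.
Import Order.TTheory GRing.Theory Num.Theory.
Local Open Scope ring_scope.

(* Sample space {0,1}^p : x j = true  <->  X_j = 1. *)
Definition Omega (p : nat) := {ffun 'I_p -> bool}.

Section Disc.
Variables (R : realType) (p : nat) (P : Omega p -> R).

Definition Ex (Y : Omega p -> R) : R := \sum_(x : Omega p) P x * Y x.
Definition Pr (A : pred (Omega p)) : R := \sum_(x : Omega p | A x) P x.

(* E(Y | X_H)(x); set to 0 on null conditioning events *)
Definition condE (H : {set 'I_p}) (Y : Omega p -> R) (x : Omega p) : R :=
  let S := [pred y : Omega p | [forall j in H, y j == x j]] in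
  let den := \sum_(y | S y) P y in
  if den == 0 then 0 else (\sum_(y | S y) P y * Y y) / den.

Definition Var (Y : Omega p -> R) : R := Ex (fun x => (Y x - Ex Y) ^+ 2).

Definition ind (i : 'I_p) (x : Omega p) : R := (x i)%:R.

Variables (M : nat) (grp : 'I_p -> 'I_M).

Definition Xg (m : 'I_M) : {set 'I_p} := [set j | grp j == m].

Definition pmin : R :=
  \big[Order.min/1]_(ij : 'I_p * 'I_p | (grp ij.1 < grp ij.2)%N)
    \big[Order.min/1]_(ab : bool * bool)
      Pr (fun x => (x ij.1 == ab.1) && (x ij.2 == ab.2)).

Definition delta0 : R :=
  \big[Order.max/0]_(m : 'I_M)
    inf [set d : R | 0 <= d /\
      Pr (fun x => \big[Order.max/0]_(i | grp i == m)
             `|condE (~: Xg m) (ind i) x - Ex (ind i)| <= d) = 1].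

Definition gm (f : Omega p -> R) (m : 'I_M) : Omega p -> R :=
  condE (Xg m) (fun y => f y - condE (~: Xg m) f y).

Definition Rseq (f : Omega p -> R) (ms : seq 'I_M) : Omega p -> R :=
  foldl (fun Rp mt => fun x => Rp x + condE (Xg mt) (fun y => f y - Rp y) x)
        (fun _ => 0) ms.

End Disc.

(* Main.v *)
Require Import Defs.
From mathcomp Require Import all_boot all_order all_algebra.
From mathcomp Require Import classical_sets reals ring lra.
Import Order.TTheory GRing.Theory Num.Theory.
Set Implicit Arguments. Unset Strict Implicit. Unset Printing Implicit Defensive.
Local Open Scope ring_scope.


Section Basic.
Variables (R : realType) (p : nat) (P : Omega p -> R).
Hypothesis P0 : forall x, 0 <= P x.
Hypothesis P1 : \sum_(x : Omega p) P x = 1.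

Definition sim (H : {set 'I_p}) (x y : Omega p) : bool := [forall j in H, y j == x j].
Definition den H x := \sum_(y | sim H x y) P y.
Definition num H (Y : Omega p -> R) x := \sum_(y | sim H x y) P y * Y y.

Lemma condEE H Y x : condE P H Y x = num H Y x / den H x.
Proof.
rewrite /condE /num /den /=; case: eqP => [->|//]; by rewrite invr0 mulr0.
Qed.

Lemma sim_refl H x : sim H x x.
Proof. by apply/forall_inP. Qed.

Lemma sim_sym H x y : sim H x y -> sim H y x.
Proof. move/forall_inP=> h; apply/forall_inP=> j /h/eqP->; by []. Qed.

Lemma sim_trans H x y z : sim H x y -> sim H y z -> sim H x z.
Proof.
move/forall_inP=> h1 /forall_inP h2; apply/forall_inP=> j hj.
by rewrite (eqP (h2 j hj)) (h1 j hj).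
Qed.

Lemma sim_eq H x y : sim H x y -> forall z, sim H x z = sim H y z.
Proof.
move=> hxy z; apply/idP/idP => h.
- exact: sim_trans (sim_sym hxy) h.
- exact: sim_trans hxy h.
Qed.

Lemma den_meas H x y : sim H x y -> den H x = den H y.
Proof. move=> h; apply: eq_bigl => z; exact: sim_eq. Qed.

Lemma condE_meas H Y x y : sim H x y -> condE P H Y x = condE P H Y y.
Proof.
move=> h; rewrite !condEE /num (den_meas h); congr (_ / _).
apply: eq_bigl => z; exact: sim_eq.
Qed.

Lemma den_ge H x : P x <= den H x.
Proof.
rewrite /den (bigD1 x) ?sim_refl //= lerDl; apply: sumr_ge0 => *; exact: P0.
Qed.

Lemma condE_ae H Y1 Y2 x : (forall z, 0 < P z -> Y1 z = Y2 z) ->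
  condE P H Y1 x = condE P H Y2 x.
Proof.
move=> h; rewrite !condEE /num; congr (_ / _); apply: eq_bigr => z _.
have := P0 z; rewrite le_eqVlt => /orP[/eqP <-|/h ->]; by rewrite ?mul0r.
Qed.

Lemma Ex_ae Y1 Y2 : (forall z, 0 < P z -> Y1 z = Y2 z) -> Ex P Y1 = Ex P Y2.
Proof.
move=> h; rewrite /Ex; apply: eq_bigr => z _.
have := P0 z; rewrite le_eqVlt => /orP[/eqP <-|/h ->]; by rewrite ?mul0r.
Qed.

Lemma Ex_le_ae Y1 Y2 : (forall z, 0 < P z -> Y1 z <= Y2 z) -> Ex P Y1 <= Ex P Y2.
Proof.
move=> h; rewrite /Ex; apply: ler_sum => z _.
have := P0 z; rewrite le_eqVlt => /orP[/eqP <-|hz]; first by rewrite !mul0r.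
by rewrite ler_wpM2l // h.
Qed.

Lemma Ex_le Y1 Y2 : (forall z, Y1 z <= Y2 z) -> Ex P Y1 <= Ex P Y2.
Proof. by move=> h; apply: Ex_le_ae => z _. Qed.

Lemma Ex_ge0 Y : (forall z, 0 <= Y z) -> 0 <= Ex P Y.
Proof. move=> h; apply: sumr_ge0 => z _; exact: mulr_ge0. Qed.

Lemma Ex_add Y1 Y2 : Ex P (fun x => Y1 x + Y2 x) = Ex P Y1 + Ex P Y2.
Proof. rewrite /Ex -big_split; apply: eq_bigr => x _ /=; ring. Qed.

Lemma Ex_sub Y1 Y2 : Ex P (fun x => Y1 x - Y2 x) = Ex P Y1 - Ex P Y2.
Proof.
rewrite /Ex -sumrB; apply: eq_bigr => x _ /=; ring.
Qed.

Lemma Ex_scal c Y : Ex P (fun x => c * Y x) = c * Ex P Y.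
Proof. rewrite /Ex mulr_sumr; apply: eq_bigr => x _ /=; ring. Qed.

Lemma Ex_cst c : Ex P (fun _ => c) = c.
Proof. by rewrite /Ex -mulr_suml P1 mul1r. Qed.

Lemma Ex_ext Y1 Y2 : (forall z, Y1 z = Y2 z) -> Ex P Y1 = Ex P Y2.
Proof. by move=> h; apply: Ex_ae => z _. Qed.


Lemma sim_symE H x y : sim H x y = sim H y x.
Proof. by apply/idP/idP => /sim_sym. Qed.

Lemma pull H (v Y : Omega p -> R) :
  (forall x y, sim H x y -> v x = v y) ->
  Ex P (fun x => v x * condE P H Y x) = Ex P (fun x => v x * Y x).
Proof.
move=> hv; rewrite /Ex.
transitivity (\sum_x \sum_y (if sim H x y then (P x * v x / den H x) * (P y * Y y) else 0)).
  apply: eq_bigr => x _; rewrite condEE /num big_mkcond /= mulr_suml mulr_sumr mulr_sumr.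
  apply: eq_bigr => y _; case: ifP => _; last by rewrite !(mul0r, mulr0).
  ring.
rewrite exchange_big /=; apply: eq_bigr => y _.
transitivity (\sum_(x | sim H y x) (P x * (v y / den H y * (P y * Y y)))).
  rewrite [RHS]big_mkcond /=; apply: eq_bigr => x _; rewrite sim_symE.
  case: ifP => // hs; rewrite (hv _ _ hs) (den_meas (sim_sym hs)); ring.
rewrite -mulr_suml -/(den H y).
have := den_ge H y; have := P0 y.
have [->|hd] := eqVneq (den H y) 0.
  move=> h1 h2; have -> : P y = 0 by apply/eqP; rewrite eq_le h2 h1.
  by rewrite !(mul0r, mulr0).
move=> _ _; field; exact: hd.
Qed.

Lemma tower H Y : Ex P (condE P H Y) = Ex P Y.
Proof.
have := @pull H (fun _ => 1) Y (fun _ _ _ => erefl).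
rewrite /Ex => h; rewrite (eq_bigr (fun x => P x * (1 * condE P H Y x))); last by move=> *; rewrite mul1r.
rewrite h; apply: eq_bigr => *; by rewrite mul1r.
Qed.

Lemma contr H Y :
  Ex P (fun x => (condE P H Y x) ^+ 2) + Ex P (fun x => (Y x - condE P H Y x) ^+ 2)
  = Ex P (fun x => Y x ^+ 2).
Proof.
have h := @pull H (condE P H Y) Y (fun x y hs => condE_meas Y hs).
rewrite -Ex_add.
have e : forall x, condE P H Y x ^+ 2 + (Y x - condE P H Y x) ^+ 2
  = Y x ^+ 2 + 2 * (condE P H Y x * condE P H Y x) - 2 * (condE P H Y x * Y x).
  move=> x; ring.
rewrite (Ex_ext e) Ex_sub Ex_add !Ex_scal h; ring.
Qed.

Lemma contr1 H Y : Ex P (fun x => (condE P H Y x) ^+ 2) <= Ex P (fun x => Y x ^+ 2).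
Proof.
rewrite -(contr H Y) lerDl; apply: Ex_ge0 => z; exact: sqr_ge0.
Qed.

Lemma contr2 H Y : Ex P (fun x => (Y x - condE P H Y x) ^+ 2) <= Ex P (fun x => Y x ^+ 2).
Proof.
rewrite -(contr H Y) lerDr; apply: Ex_ge0 => z; exact: sqr_ge0.
Qed.

Lemma dsumD (a b : Omega p -> Omega p -> R) :
  \sum_x \sum_y (a x y + b x y) = \sum_x \sum_y a x y + \sum_x \sum_y b x y.
Proof. rewrite -big_split; apply: eq_bigr => x _; by rewrite -big_split. Qed.

Lemma dsumZ c (a : Omega p -> Omega p -> R) :
  \sum_x \sum_y (c * a x y) = c * \sum_x \sum_y a x y.
Proof. rewrite mulr_sumr; apply: eq_bigr => x _; by rewrite mulr_sumr. Qed.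

Lemma CS (w z : Omega p -> R) :
  (Ex P (fun x => w x * z x)) ^+ 2 <= Ex P (fun x => w x ^+ 2) * Ex P (fun x => z x ^+ 2).
Proof.
rewrite -subr_ge0.
set T := fun x y : Omega p => P x * w x ^+ 2 * (P y * z y ^+ 2).
set U := fun x y : Omega p => P x * (w x * z x) * (P y * (w y * z y)).
have e1 : Ex P (fun x => w x ^+ 2) * Ex P (fun x => z x ^+ 2) = \sum_x \sum_y T x y.
  by rewrite /Ex big_distrlr.
have e2 : Ex P (fun x => w x * z x) ^+ 2 = \sum_x \sum_y U x y.
  by rewrite /Ex expr2 big_distrlr.
have e3 : \sum_x \sum_y (P x * P y * (w x * z y - w y * z x) ^+ 2)
   = \sum_x \sum_y (T x y + (T y x + (-2) * U x y)).
  apply: eq_bigr => x _; apply: eq_bigr => y _; rewrite /T /U; ring.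
have e4 : \sum_x \sum_y T y x = \sum_x \sum_y T x y by rewrite exchange_big.
have : 0 <= \sum_x \sum_y (P x * P y * (w x * z y - w y * z x) ^+ 2).
  apply: sumr_ge0 => x _; apply: sumr_ge0 => y _.
  by apply: mulr_ge0; [apply: mulr_ge0 | apply: sqr_ge0].
rewrite e3 !dsumD dsumZ e4 e1 e2; lra.
Qed.

End Basic.

Section RS.
Variables (R : realType) (p M : nat) (P : Omega p -> R) (grp : 'I_p -> 'I_M) (f : Omega p -> R) (m : 'I_M).
Hypothesis P0 : forall x, 0 <= P x.
Hypothesis P1 : \sum_(x : Omega p) P x = 1.
Hypothesis Ef : Ex P f = 0.

Definition stepR (Rp : Omega p -> R) (mt : 'I_M) : Omega p -> R :=
  fun x => Rp x + condE P (Xg grp mt) (fun y => f y - Rp y) x.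

Definition Inv (r : Omega p -> R) :=
  [/\ Ex P (fun x => (f x - r x) ^+ 2) <= Ex P (fun x => f x ^+ 2),
      Ex P r = 0 &
      (forall x y, sim (~: Xg grp m) x y -> r x = r y)].

Lemma sim_sub mt x y : mt != m -> sim (~: Xg grp m) x y -> sim (Xg grp mt) x y.
Proof.
move=> hne /forall_inP h; apply/forall_inP => j; rewrite inE => /eqP hj.
apply: h; rewrite !inE hj; exact: hne.
Qed.

Lemma Inv_step r mt : mt != m -> Inv r -> Inv (stepR r mt).
Proof.
move=> hne [h1 h2 h3]; split.
- apply: le_trans h1.
  have := contr2 P0 (Xg grp mt) (fun y => f y - r y).
  congr (_ <= _); apply: (Ex_ext P0) => x; rewrite /stepR /=; ring.
- rewrite /stepR. rewrite (Ex_add P) tower // Ex_sub Ef h2; ring.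
- move=> x y hs; rewrite /stepR (h3 _ _ hs); congr (_ + _).
  apply: condE_meas; exact: sim_sub hs.
Qed.

Lemma Inv_fold r ms : all (fun mt => mt != m) ms -> Inv r -> Inv (foldl stepR r ms).
Proof.
elim: ms r => [//|mt ms IH] r /= /andP[hm hall] hr.
apply: IH => //; exact: Inv_step.
Qed.

Lemma Inv_Rseq ms : m \notin ms -> Inv (Rseq P grp f ms).
Proof.
move=> hm; apply: Inv_fold.
  apply/allP => mt hin; apply/eqP => e; move: hm; by rewrite -e hin.
split.
- apply: (Ex_le P0) => x /=; by rewrite subr0.
- by rewrite /Ex big1 // => x _; rewrite mulr0.
- by [].
Qed.

End RS.

Section Key.
Variables (R : realType) (p M : nat) (P : Omega p -> R) (grp : 'I_p -> 'I_M).
Hypothesis P0 : forall x, 0 <= P x.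
Hypothesis P1 : \sum_(x : Omega p) P x = 1.
Hypothesis hsurj : forall k : 'I_M, exists j, grp j = k.
Hypothesis honehot : forall k : 'I_M, (1 < #|Xg grp k|)%N ->
     Pr P (fun x => #|[set j in Xg grp k | x j]| == 1%N) = 1.

Lemma Pr1 (A : pred (Omega p)) : Pr P A = 1 -> forall y, 0 < P y -> A y.
Proof.
move=> hA y hy; apply/negPn/negP => hn.
have h : \sum_(z | ~~ A z) P z = 0.
  move: P1; rewrite (bigID A) /= -/(Pr P A) hA => e.
  by apply: (addrI 1); rewrite e addr0.
have := psumr_eq0P (fun z _ => P0 z) h hn.
by move=> e; move: hy; rewrite e ltxx.
Qed.

Lemma key_index (m : 'I_M) x : 0 < P x -> exists i, grp i = m /\
  forall y, 0 < P y -> sim (Xg grp m) x y = (y i == x i).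
Proof.
move=> hx.
case: (ltnP 1 #|Xg grp m|) => hc.
- have h1 := Pr1 (honehot hc).
  have /cards1P [i hi] := h1 x hx.
  have hiS : i \in [set j in Xg grp m | x j] by rewrite hi inE.
  move: (hiS); rewrite !inE => /andP[/eqP gi xi].
  exists i; split => // y hy.
  have /cards1P [i' hi'] := h1 y hy.
  have ex j : j \in Xg grp m -> x j = (j == i).
    by move=> hj; move: hi => /setP /(_ j); rewrite finset.in_set1 finset.in_set hj.
  apply/idP/idP.
  + move/forall_inP => h; apply: h; by rewrite inE gi.
  + rewrite xi eqb_id => yi.
    have hi'i : i' = i.
      have : i \in [set j in Xg grp m | y j] by rewrite !inE gi eqxx yi.
      by rewrite hi' inE => /eqP.
    have ey j : j \in Xg grp m -> y j = (j == i).
      by move=> hj; move: hi' => /setP /(_ j); rewrite finset.in_set1 finset.in_set hj hi'i.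
    apply/forall_inP => j hj; by rewrite (ex _ hj) (ey _ hj).
- have [j0 hj0] := hsurj m.
  have hj0in : j0 \in Xg grp m by rewrite inE hj0.
  exists j0; split => // y hy.
  apply/idP/idP.
  + move/forall_inP => h; exact: h.
  + move=> e; apply/forall_inP => j hj.
    have -> : j = j0 by apply: (card_le1_eqP hc).
    exact: e.
Qed.


Lemma delta0_ge0 : 0 <= delta0 P grp.
Proof. exact: bigmax_ge_id. Qed.

Lemma delta_bound (m : 'I_M) i y : grp i = m -> 0 < P y ->
  `|condE P (~: Xg grp m) (ind R i) y - Ex P (ind R i)| <= delta0 P grp.
Proof.
move=> gi hy.
set G := fun x => \big[Order.max/0]_(i | grp i == m)
             `|condE P (~: Xg grp m) (ind R i) x - Ex P (ind R i)|.
apply: (@le_trans _ _ (G y)).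
  by rewrite /G; apply: (@le_bigmax_cond _ _ _ _ i); rewrite gi.
apply: le_trans; last exact: (le_bigmax _ _ m).
apply: lb_le_inf.
- exists (\big[Order.max/0]_x G x); split; first exact: bigmax_ge_id.
  rewrite /Pr -P1; apply: eq_bigl => x; exact: le_bigmax.
- move=> d [_ hd]; exact: (Pr1 hd).
Qed.

Definition ev (m : 'I_M) x := fun z : Omega p => ((sim (Xg grp m) x z)%:R : R).

Lemma num_sub H Y x : num P H (fun z => 1 - Y z) x = den P H x - num P H Y x.
Proof. rewrite /num /den -sumrB; apply: eq_bigr => z _; ring. Qed.

Lemma e_dev (m : 'I_M) x y : 0 < P x -> 0 < P y ->
  `|condE P (~: Xg grp m) (ev m x) y - Ex P (ev m x)| <= delta0 P grp.
Proof.
move=> hx hy; have [i [gi hk]] := key_index m hx.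
have hae : forall z, 0 < P z -> ev m x z = if x i then ind R i z else 1 - ind R i z.
  move=> z hz; rewrite /ev /ind hk //; case: (x i); case: (z i) => /=; by rewrite ?subrr ?subr0.
rewrite (condE_ae P0 _ _ hae) (Ex_ae P0 hae).
case: (x i); first exact: delta_bound.
have hd : den P (~: Xg grp m) y != 0.
  by rewrite gt_eqF // (lt_le_trans hy) // den_ge.
rewrite condEE num_sub (Ex_sub P (fun _ => 1)) Ex_cst //.
have -> : (den P (~: Xg grp m) y - num P (~: Xg grp m) (ind R i) y) / den P (~: Xg grp m) y
   = 1 - condE P (~: Xg grp m) (ind R i) y.
  rewrite condEE; field; exact: hd.
have -> : forall a b : R, 1 - a - (1 - b) = - (a - b) by move=> a b; ring.
rewrite normrN; exact: delta_bound.
Qed.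


Hypothesis hM : (2 <= M)%N.

Lemma other (m : 'I_M) : exists k : 'I_M, k != m.
Proof.
have h0 : (0 < M)%N by apply: leq_trans hM.
have h1 : (1 < M)%N by [].
case: (eqVneq (val m) 0%N) => h.
- exists (Ordinal h1); apply/eqP => e; move: h; by rewrite -e.
- exists (Ordinal h0); apply/eqP => e; move: h; by rewrite -e eqxx.
Qed.

Lemma den_ge_pmin (m : 'I_M) x : 0 < P x -> pmin P grp <= den P (Xg grp m) x.
Proof.
move=> hx; have [i [gi hk]] := key_index m hx.
have [k hkm] := other m; have [j gj] := hsurj k.
have hle : Pr P (fun y => (y i == x i) && (y j == true)) <= den P (Xg grp m) x.
  rewrite /Pr /den big_mkcond [X in _ <= X]big_mkcond /=; apply: ler_sum => y _.
  have := P0 y; rewrite le_eqVlt => /orP[/eqP <-|hy]; first by case: ifP; case: ifP.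
  rewrite hk //; by case: (y i == x i); case: (y j == true); rewrite /= ?lexx ?P0.
apply: le_trans hle.
case: (ltngtP (grp i) (grp j)) => hc.
- apply: le_trans; first exact: (@bigmin_le_cond _ _ _ _ (i, j) (fun ij => (grp ij.1 < grp ij.2)%N)).
  exact: (@bigmin_le _ _ _ _ (x i, true)).
- apply: le_trans; first exact: (@bigmin_le_cond _ _ _ _ (j, i) (fun ij => (grp ij.1 < grp ij.2)%N)).
  apply: le_trans; first exact: (@bigmin_le _ _ _ _ (true, x i)).
  rewrite /Pr le_eqVlt; apply/orP; left; apply/eqP; apply: eq_bigl => y /=; by rewrite andbC.
- exfalso; move: hkm; rewrite -gj -gi; apply/negP; rewrite negbK; apply/eqP/val_inj; by rewrite /= hc.
Qed.

Lemma Ex_norm Y : `|Ex P Y| <= Ex P (fun z => `|Y z|).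
Proof.
rewrite /Ex; apply: le_trans; first exact: ler_norm_sum.
apply: ler_sum => z _; by rewrite normrM ger0_norm.
Qed.

Lemma L4 (m : 'I_M) (u : Omega p -> R) x : 0 < P x ->
  (forall a b, sim (~: Xg grp m) a b -> u a = u b) -> Ex P u = 0 -> 0 < pmin P grp ->
  `|condE P (Xg grp m) u x| <= delta0 P grp / pmin P grp * Ex P (fun z => `|u z|).
Proof.
move=> hx hu Eu hp.
set c := condE P (~: Xg grp m) (ev m x).
set D := den P (Xg grp m) x.
have hD : pmin P grp <= D by exact: den_ge_pmin.
have hD0 : 0 < D by exact: lt_le_trans hD.
have eD : Ex P (ev m x) = D.
  rewrite /Ex /D /den [RHS]big_mkcond; apply: eq_bigr => z _; rewrite /ev.
  by case: ifP => _; rewrite ?mulr1 ?mulr0.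
have en : num P (Xg grp m) u x = Ex P (fun z => u z * (c z - D)).
  have -> : Ex P (fun z => u z * (c z - D)) = Ex P (fun z => u z * c z) - D * Ex P u.
    rewrite -Ex_scal -Ex_sub; apply: Ex_ext => // z; ring.
  rewrite Eu mulr0 subr0 /c pull //.
  rewrite /num /Ex big_mkcond; apply: eq_bigr => z _; rewrite /ev.
  by case: ifP => _; rewrite ?mulr1 ?mulr0 ?mul0r // mulrC.
have hn : `|num P (Xg grp m) u x| <= delta0 P grp * Ex P (fun z => `|u z|).
  rewrite en -Ex_scal; apply: le_trans; first exact: Ex_norm.
  apply: Ex_le_ae => // z hz; rewrite normrM mulrC ler_wpM2r //.
  rewrite /c -eD; exact: e_dev.
rewrite condEE normrM normfV (gtr0_norm hD0) -/D.
have hE : 0 <= Ex P (fun z => `|u z|) by apply: Ex_ge0 => z.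
have hd := delta0_ge0.
rewrite ler_pdivrMr // -/D.
apply: le_trans hn _.
have -> : delta0 P grp / pmin P grp * Ex P (fun z => `|u z|) * D
  = (delta0 P grp * Ex P (fun z => `|u z|)) * (D / pmin P grp).
  field; exact: lt0r_neq0.
have h1 : 1 <= D / pmin P grp by rewrite ler_pdivlMr // mul1r.
have h0 : 0 <= delta0 P grp * Ex P (fun z => `|u z|) by apply: mulr_ge0.
nra.
Qed.

End Key.
Lemma condE_sub (R : realType) p (P : Omega p -> R) H Y1 Y2 x :
  condE P H (fun z => Y1 z - Y2 z) x = condE P H Y1 x - condE P H Y2 x.
Proof. rewrite !condEE /num -mulrBl -sumrB; congr (_ / _); apply: eq_bigr => z _; ring. Qed.

Theorem mainTheorem10 (R : realType) (p M : nat) (P : Omega p -> R)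
  (grp : 'I_p -> 'I_M) (f : Omega p -> R) (ms : seq 'I_M) (m : 'I_M) :
  (forall x, 0 <= P x) -> \sum_(x : Omega p) P x = 1 ->
  (2 <= M)%N -> (forall k : 'I_M, exists j, grp j = k) ->
  (forall k : 'I_M, (1 < #|Xg grp k|)%N ->
     Pr P (fun x => #|[set j in Xg grp k | x j]| == 1%N) = 1) ->
  Ex P f = 0 ->
  0 < pmin P grp ->
  m \notin ms ->
  `| Ex P (fun x => (condE P (Xg grp m) (fun y => f y - Rseq P grp f ms y) x) ^+ 2)
     - Var P (gm P grp f m) |
  <= 21%:R * delta0 P grp / (pmin P grp) ^+ 2 * Ex P (fun x => f x ^+ 2).
Proof.
move=> P0 P1 hM hsurj honehot Ef hp hm.
have [i1 i2 i3] := Inv_Rseq grp P0 Ef hm.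
set Rr := Rseq P grp f ms in i1 i2 i3 *.
set F := Ex P (fun x => f x ^+ 2) in i1 *.
set A := fun x => condE P (Xg grp m) (fun y => f y - Rr y) x.
set g := gm P grp f m.
set u := fun x => condE P (~: Xg grp m) f x - Rr x.
set d := delta0 P grp; set q := pmin P grp.
have hd : 0 <= d by exact: delta0_ge0.
have hF : 0 <= F by apply: Ex_ge0 => // z; exact: sqr_ge0.
have hA : Ex P (fun x => A x ^+ 2) <= F by apply: le_trans i1; exact: contr1.
have hg : Ex P (fun x => g x ^+ 2) <= F.
  apply: le_trans; first exact: contr1.
  exact: contr2.
have Eg : Ex P g = 0.
  rewrite /g /gm tower // (Ex_sub P f) tower //; ring.
have eV : Var P g = Ex P (fun x => g x ^+ 2).
  rewrite /Var Eg; apply: Ex_ext => // z; by rewrite subr0.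
have hum : forall a b, sim (~: Xg grp m) a b -> u a = u b.
  move=> a b hs; rewrite /u (i3 _ _ hs); congr (_ - _); exact: condE_meas.
have Eu : Ex P u = 0 by rewrite /u (Ex_sub P) tower // Ef i2 subrr.
have hu2 : Ex P (fun x => u x ^+ 2) <= 4%:R * F.
  have hc := contr2 P0 (~: Xg grp m) f; rewrite -/F in hc.
  apply: le_trans.
    apply: (Ex_le P0 (Y2 := fun x => 2%:R * (f x - Rr x) ^+ 2 + 2%:R * (f x - condE P (~: Xg grp m) f x) ^+ 2)).
    move=> z; rewrite /u /=.
    set a := f z - Rr z; set b := f z - condE P (~: Xg grp m) f z.
    have -> : condE P (~: Xg grp m) f z - Rr z = a - b by rewrite /a /b; ring.
    have := sqr_ge0 (a + b); nra.
  rewrite Ex_add !Ex_scal. lra.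
have hEu : Ex P (fun z => `|u z|) ^+ 2 <= Ex P (fun x => u x ^+ 2).
  have := CS P0 (fun z => `|u z|) (fun _ => 1).
  rewrite (Ex_ext P0 (Y1 := fun x => 1 ^+ 2) (Y2 := fun _ => 1)) ?expr1n // Ex_cst // mulr1.
  rewrite (Ex_ext P0 (Y1 := fun x => `|u x| * 1) (Y2 := fun x => `|u x|)) => [|z]; last by rewrite mulr1.
  rewrite (Ex_ext P0 (Y1 := fun x => `|u x| ^+ 2) (Y2 := fun x => u x ^+ 2)) // => z.
  by rewrite real_normK // num_real.
have hE0 : 0 <= Ex P (fun z => `|u z|) by apply: Ex_ge0 => // z.
have hw : Ex P (fun x => (A x - g x) ^+ 2) <= (d / q) ^+ 2 * (4%:R * F).
  rewrite -[X in _ <= X](Ex_cst P1).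
  apply: Ex_le_ae => // x hx.
  have -> : A x - g x = condE P (Xg grp m) u x.
    rewrite /A /g /gm -condE_sub; apply: condE_ae => // z _; rewrite /u; ring.
  have := L4 P0 P1 hsurj honehot hM hx hum Eu hp.
  rewrite -/d -/q => hL.
  have hk : 0 <= d / q by apply: divr_ge0 => //; exact: ltW.
  move: hL; set t := condE P (Xg grp m) u x; set E := Ex P (fun z => `|u z|) => hL.
  have h1 : t ^+ 2 <= (d / q * E) ^+ 2.
    have := ler_norml t (d / q * E); rewrite hL => /esym /andP [h1 h2].
    have : 0 <= d / q * E by apply: mulr_ge0.
    nra.
  apply: le_trans h1 _.
  rewrite exprMn; apply: ler_wpM2l; first exact: sqr_ge0.
  by apply: le_trans hEu hu2.
have hz : Ex P (fun x => (A x + g x) ^+ 2) <= 4%:R * F.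
  apply: le_trans.
    apply: (Ex_le P0 (Y2 := fun x => 2%:R * A x ^+ 2 + 2%:R * g x ^+ 2)) => z /=; have := sqr_ge0 (A z - g z); nra.
  rewrite Ex_add !Ex_scal; lra.
have eL : Ex P (fun x => condE P (Xg grp m) (fun y => f y - Rr y) x ^+ 2) - Var P g
  = Ex P (fun x => (A x - g x) * (A x + g x)).
  rewrite eV -Ex_sub; apply: Ex_ext => // z; rewrite /A; ring.
rewrite eL.
have hcs := CS P0 (fun x => A x - g x) (fun x => A x + g x).
set X := Ex P (fun x => (A x - g x) * (A x + g x)) in hcs *.
have hX : X ^+ 2 <= (4%:R * d / q * F) ^+ 2.
  apply: le_trans hcs _.
  have -> : (4%:R * d / q * F) ^+ 2 = ((d / q) ^+ 2 * (4%:R * F)) * (4%:R * F).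
    rewrite /q; field; exact: lt0r_neq0.
  apply: ler_pM => //; try apply: Ex_ge0 => // z; try exact: sqr_ge0.
have hB : 0 <= 4%:R * d / q * F.
  apply: mulr_ge0 => //; apply: divr_ge0; [apply: mulr_ge0 => // | exact: ltW].
have hq1 : q <= 1 by exact: bigmin_le_id.
have habs : `|X| <= 4%:R * d / q * F.
  rewrite ler_norml; apply/andP; split; nra.
apply: le_trans habs _.
have -> : 21%:R * d / q ^+ 2 * F = 21%:R * (d / q * F) * q^-1.
  rewrite /q; field; exact: lt0r_neq0.
have -> : 4%:R * d / q * F = 4%:R * (d / q * F) by rewrite /q; field; exact: lt0r_neq0.
have hi : 1 <= q^-1 by rewrite invf_ge1.
have : 0 <= d / q * F by apply: mulr_ge0 => //; apply: divr_ge0 => //; exact: ltW.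
nra.
Qed.
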